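(* Let $C_n=\frac1{n+1}\binom{2n}n$ be the $n$-th Catalan number. Then, as Laurent series in $z$, $$\sum_{n\ge0}C_nz^n=-13z^{-1}-3\left(4+2z^{-1}\right)\Psi(-z)+\left(-8z-14+4z^{-1}\right)\Psi^3(-z)+3\left(z^2-6z+9-4z^{-1}\right)\Psi^5(-z)\quad\text{modulo }27.$$
   Context: $\Psi(z)=\prod_{j\ge0}(1+z^{3^j})$, so $\Psi(-z)=\prod_{j\ge0}(1-z^{3^j})$. ''Modulo $27$'' means coefficientwise congruence of Laurent series in $z$. *)

(* Defs.v *)
From HB Require Import structures.
From mathcomp Require Import all_boot all_order all_algebra.
Set Implicit Arguments. Unset Strict Implicit. Unset Printing Implicit Defensive.
Import GRing.Theory.
Local Open Scope ring_scope.

(* Catalan number C_n = binom(2n,n)/(n+1) (the division is exact). *)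
Definition catalan (n : nat) : nat := ('C(n.*2, n) %/ n.+1)%N.

(* Truncation of Psi(-z) = prod_{j>=0} (1 - z^(3^j)) to its first N factors.
   For N > log_3 m, its coefficients of z^0..z^m agree with those of the
   infinite product (the remaining factors are 1 + O(z^(3^N))). *)
Definition psiN_trunc (N : nat) : {poly int} :=
  \prod_(j < N) (1 - 'X^(3 ^ j)).

(* z times the right-hand side of the identity, with Psi(-z) replaced by its
   truncation to N factors:
   z * RHS = -13 - 3(4z+2) Psi(-z) + (-8z^2-14z+4) Psi(-z)^3
             + 3(z^3-6z^2+9z-4) Psi(-z)^5. *)
Definition zRHS (N : nat) : {poly int} :=
  let Q := psiN_trunc N in
  - 13%:P
  - 3%:P * (4%:P * 'X + 2%:P) * Q
  + (- 8%:P * 'X^2 - 14%:P * 'X + 4%:P) * Q ^+ 3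
  + 3%:P * ('X^3 - 6%:P * 'X^2 + 9%:P * 'X - 4%:P) * Q ^+ 5.

(* Main.v *)
Require Import Defs.
From mathcomp Require Import all_boot all_order all_algebra.
From mathcomp Require Import ring zify.
Import GRing.Theory.
Local Open Scope ring_scope.

Definition g0 : {poly int} := ((7)%:P * 'X^0 + (-8)%:P * 'X^1 + (-6)%:P * 'X^2 + (8)%:P * 'X^3 + (-1)%:P * 'X^4).
Definition g1 : {poly int} := ((84)%:P * 'X^0 + (-180)%:P * 'X^1 + (129)%:P * 'X^2 + (-36)%:P * 'X^3 + (-18)%:P * 'X^4 + (24)%:P * 'X^5 + (-3)%:P * 'X^6).
Definition g2 : {poly int} := ((432)%:P * 'X^0 + (-1260)%:P * 'X^1 + (1530)%:P * 'X^2 + (-1080)%:P * 'X^3 + (504)%:P * 'X^4 + (-180)%:P * 'X^5 + (54)%:P * 'X^6).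
Definition f3 : {poly int} := ((1216)%:P * 'X^0 + (-4356)%:P * 'X^1 + (6726)%:P * 'X^2 + (-6152)%:P * 'X^3 + (3744)%:P * 'X^4 + (-1452)%:P * 'X^5 + (274)%:P * 'X^6).
Definition f4 : {poly int} := ((624)%:P * 'X^0 + (-2592)%:P * 'X^1 + (4545)%:P * 'X^2 + (-4416)%:P * 'X^3 + (2538)%:P * 'X^4 + (-792)%:P * 'X^5 + (93)%:P * 'X^6).
Definition f5 : {poly int} := ((144)%:P * 'X^0 + (-648)%:P * 'X^1 + (1161)%:P * 'X^2 + (-1044)%:P * 'X^3 + (486)%:P * 'X^4 + (-108)%:P * 'X^5 + (9)%:P * 'X^6).

Definition rP (Q : {poly int}) : {poly int} :=
  - 3%:P * (4%:P * 'X + 2%:P) + (- 8%:P * 'X^2 - 14%:P * 'X + 4%:P) * Q ^+ 2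
  + 3%:P * ('X^3 - 6%:P * 'X^2 + 9%:P * 'X - 4%:P) * Q ^+ 4.

Lemma zRHS_eq N : zRHS N = - 13%:P + psiN_trunc N * rP (psiN_trunc N).
Proof. rewrite /zRHS /rP; set Q := psiN_trunc N; ring. Qed.

Lemma main_identity (Q : {poly int}) :
  let G := - 13%:P + Q * rP Q in
  let S := (1 - 'X) * Q ^+ 2 - 1 in
  (1 - 'X) ^+ 5 * (G ^+ 2 - G + 'X) =
  27%:P * g0 + 9%:P * g1 * S + 3%:P * g2 * S ^+ 2 + f3 * S ^+ 3 + f4 * S ^+ 4
  + f5 * S ^+ 5 + 27%:P * ((1 - 'X) ^+ 5 * (7%:P - Q * rP Q)).
Proof. rewrite /= /rP /g0 /g1 /g2 /f3 /f4 /f5; ring. Qed.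

Definition Z27 (K : nat) (p : {poly int}) := forall i, (i < K)%N -> (27 %| p`_i)%Z.

Lemma Z27D K p q : Z27 K p -> Z27 K q -> Z27 K (p + q).
Proof. by move=> hp hq i hi; rewrite coefD rpredD ?hp ?hq. Qed.

Lemma Z27N K p : Z27 K p -> Z27 K (- p).
Proof. by move=> hp i hi; rewrite coefN rpredN hp. Qed.

Lemma Z27Mr K p q : Z27 K p -> Z27 K (q * p).
Proof.
move=> hp i hi; rewrite coefM; apply: rpred_sum => j _.
apply: dvdz_mull; apply: hp; rewrite subnE; lia.
Qed.

Lemma Z27Ml K p q : Z27 K p -> Z27 K (p * q).
Proof. by move=> hp; rewrite mulrC; apply: Z27Mr. Qed.

Lemma Z27_27 K q : Z27 K (27%:P * q).
Proof. by move=> i _; rewrite coefCM dvdz_mulr. Qed.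

Lemma Z27_Xn K M q : (K <= M)%N -> Z27 K ('X^M * q).
Proof.
move=> hKM i hi; rewrite coefXnM.
have -> : (i < M)%N by lia.
by rewrite dvdz0.
Qed.

Lemma Z27_cancel K (D U : {poly int}) (e : int) : (27 %| U`_0 * e - 1)%Z -> Z27 K (D * U) -> Z27 K D.
Proof.
move=> hU hDU i; elim/ltn_ind: i => i IH hi.
have h1 : (27 %| D`_i * U`_0)%Z.
  have := hDU i hi; rewrite coefM big_ord_recr /= subnn.
  rewrite rpredDl //; apply: rpred_sum => j _; apply: dvdz_mulr.
  have hj := ltn_ord j; apply: IH => //; lia.
move: h1 hU; move: (D`_i) (U`_0) => a b h1 hU.
have -> : a = a * b * e - a * (b * e - 1) by rewrite mulrBr mulr1 mulrA opprB addrC subrK.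
by apply: rpredB; [apply: dvdz_mulr | apply: dvdz_mull].
Qed.

Lemma bin_dvd n : (n.+1 %| 'C(n.*2, n))%N.
Proof.
have h := mul_bin_left n.*2 n.
have -> : 'C(n.*2, n) = (n.+1 * ('C(n.*2, n) - 'C(n.*2, n.+1)))%N.
  rewrite mulnBr h -mulnBl.
  have -> : (n.+1 - (n.*2 - n) = 1)%N by rewrite -addnn addnK subSnn.
  by rewrite mul1n.
exact: dvdn_mulr.
Qed.

Lemma catalanE n : (catalan n * n.+1 = 'C(n.*2, n))%N.
Proof. by rewrite /catalan divnK // bin_dvd. Qed.

Lemma cat_rec n : (n.+2 * catalan n.+1 = (4 * n + 2) * catalan n)%N.
Proof.
have h1 := catalanE n.+1.
have h2 := catalanE n.
have h3 := mul_bin_diag n.*2.+2 n.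
have h4 := mul_bin_diag n.*2.+1 n.
have h5 : 'C(n.*2.+1, n.+1) = 'C(n.*2.+1, n).
  rewrite -bin_sub; last by rewrite -addnn; lia.
  by congr 'C(_, _); rewrite -addnn; lia.
rewrite /= in h3 h4.
have e : (n.+1).*2 = n.*2.+2 by rewrite doubleS.
rewrite e in h1.
rewrite h5 in h4.
move: h1 h2 h3 h4; rewrite -!addnn.
move: (catalan n.+1) (catalan n) ('C((n + n).+2, n.+1)) ('C(n + n, n)) ('C((n + n).+1, n)) => c1 c0 B2 B0 A.
move=> h1 h2 h3 h4.
apply/eqP; rewrite -(eqn_pmul2l (ltn0Sn n)); apply/eqP.
have E1 : (n.+1 * (n.+2 * c1) = n.+1 * B2)%N by rewrite -h1; ring.
have E2 : (n.+1 * ((4 * n + 2) * c0) = 2 * ((n + n).+1 * B0))%N by rewrite -h2; ring.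
rewrite E1 E2 h4 -h3; ring.
Qed.

Lemma low_coef (V W : {poly int}) k :
  (forall i, (i < k)%N -> V`_i = 0) -> (V * W)`_k = V`_k * W`_0.
Proof.
move=> hV; rewrite coefM big_ord_recr /= subnn big1 ?add0r // => j _.
by rewrite hV ?mul0r.
Qed.

Lemma coef0_1X (W : {poly int}) : (1 + 'X * W)`_0 = 1.
Proof. by rewrite coefD coef1 coefXM addr0. Qed.

Lemma coefXderiv (p : {poly int}) i : ('X * p^`())`_i = p`_i *+ i.
Proof. by rewrite coefXM; case: i => [|i] //=; rewrite coef_deriv. Qed.

Lemma ode_id (p E : {poly int}) : E = 'X * p ^+ 2 - p + 1 ->
  'X * p^`() - 4%:P * ('X * ('X * p^`())) - 1 + p - 2%:P * ('X * p) =
  - (E * (1 + 'X * (2%:P * p + 4%:P * ('X * p^`()))))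
  - 'X * ((p ^+ 2 + 2%:P * 'X * p * p^`() - p^`()) * (1 + 'X * (- 2%:P * p))).
Proof. move=> ->; ring. Qed.

Lemma deriv_E (p : {poly int}) :
  ('X * p ^+ 2 - p + 1)^`() = p ^+ 2 + 2%:P * 'X * p * p^`() - p^`().
Proof.
rewrite !derivE /=; ring.
Qed.
Lemma aux (N C1 C0 T : int) : (N + 2) * C1 = (4 * N + 2) * C0 ->
  0 * (N + 1) - 4 * (C0 * N) - 0 + 0 - 2 * C0 = - (T * 1) - T * (N + 1) * 1 ->
  (N + 2) * (C1 - T) = 0.
Proof.
move=> h1 h2.
transitivity ((N + 2) * C1 - (4 * N + 2) * C0 -
     ((0 * (N + 1) - 4 * (C0 * N) - 0 + 0 - 2 * C0) - (- (T * 1) - T * (N + 1) * 1))).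
  ring.
by rewrite h1 h2 !subrr.
Qed.

Lemma finish (n c1 c0 : nat) (tt : int) :
  0 *+ n.+1 - 4 * (c0%:Z *+ n) - 0 + 0 - 2 * c0%:Z = - (tt * 1) - tt *+ n.+1 * 1 ->
  (n.+2 * c1 = (4 * n + 2) * c0)%N -> c1%:Z = tt.
Proof.
move=> key cr.
have cr' : (n%:Z + 2) * c1%:Z = (4 * n%:Z + 2) * c0%:Z.
  have -> : (n%:Z + 2) = (n.+2)%:Z by lia.
  have -> : (4 * n%:Z + 2) = (4 * n + 2)%N%:Z by lia.
  by rewrite -!PoszM cr.
rewrite !pmulrn !mulrzz in key.
have hn1 : (n.+1)%:Z = n%:Z + 1 by lia.
rewrite hn1 !mul1r in key.
have e := aux _ _ _ _ cr' key.
move/eqP: e; rewrite mulf_eq0 => /orP [/eqP h|]; first by lia.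
by rewrite subr_eq0 => /eqP.
Qed.
Lemma segner n : (catalan n.+1)%:Z = \sum_(i < n.+1) (catalan i)%:Z * (catalan (n - i))%:Z.
Proof.
elim/ltn_ind: n => n IH.
set t := \sum_(i < n.+1) _.
pose p : {poly int} := \poly_(k < n.+1) (catalan k)%:Z.
pose E := 'X * p ^+ 2 - p + 1.
have hp : forall k, (k <= n)%N -> p`_k = (catalan k)%:Z.
  by move=> k hk; rewrite coef_poly ltnS hk.
have hpn : p`_n.+1 = 0 by rewrite coef_poly ltnn.
have hsq : forall k, (k <= n)%N ->
    (p ^+ 2)`_k = \sum_(i < k.+1) (catalan i)%:Z * (catalan (k - i))%:Z.
  move=> k hk; rewrite expr2 coefM; apply: eq_bigr => i _.
  have hi := ltn_ord i.
  rewrite !hp //; lia.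
have hE : forall i, (i < n.+1)%N -> E`_i = 0.
  case=> [|k] hk.
    by rewrite /E !coefD coefN coefXM coef1 hp.
  rewrite /E !coefD coefN coefXM coef1 /= hsq; last by lia.
  by rewrite hp // -IH // addr0 subrr.
have hEn : E`_n.+1 = t.
  by rewrite /E !coefD coefN coefXM coef1 /= hsq // hpn subr0 addr0.
have hE' : forall i, (i < n)%N -> (E^`())`_i = 0.
  by move=> i hi; rewrite coef_deriv hE ?mul0rn.
have hEd : E = 'X * p ^+ 2 - p + 1 by [].
have key := congr1 (fun q : {poly int} => q`_n.+1) (ode_id p E hEd).
rewrite -deriv_E -/E /= in key.
rewrite !(coefD, coefB, coefN, coefCM, coefXderiv, coefXM, coef1) /= in key.
rewrite low_coef // low_coef // !coef0_1X !coef_deriv hEn hpn hp // in key.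
exact: (finish _ _ _ _ key (cat_rec n)).
Qed.

Lemma psi_mod3 N : exists T : {poly int},
  (1 - 'X) * psiN_trunc N ^+ 2 = 1 - 'X^(3 ^ N) + 3%:P * T.
Proof.
elim: N => [|N [T hT]].
  by exists 0; rewrite /psiN_trunc big_ord0 expr1n mulr1 expn0 mulr0 addr0.
have e : psiN_trunc N.+1 = psiN_trunc N * (1 - 'X^(3 ^ N)).
  by rewrite /psiN_trunc big_ord_recr.
have e3 : 'X^(3 ^ N.+1) = ('X^(3 ^ N)) ^+ 3 :> {poly int}.
  by rewrite expnS mulnC exprM.
move: hT; rewrite e e3; move: ('X^(3 ^ N)) (psiN_trunc N) => a Q hT.
exists (a ^+ 2 - a + T * (1 - a) ^+ 2).
have -> : (1 - 'X) * (Q * (1 - a)) ^+ 2 = ((1 - 'X) * Q ^+ 2) * (1 - a) ^+ 2 by ring.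
rewrite hT; ring.
Qed.

Lemma ZS1 K M (T S a : {poly int}) : (K <= M)%N -> S = 3%:P * T - 'X^M ->
  Z27 K (9%:P * a * S).
Proof.
move=> hKM ->.
have -> : 9%:P * a * (3%:P * T - 'X^M) = 27%:P * (a * T) + 'X^M * (- 9%:P * a) by ring.
by apply: Z27D; [apply: Z27_27 | apply: Z27_Xn].
Qed.

Lemma ZS2 K M (T S a : {poly int}) : (K <= M)%N -> S = 3%:P * T - 'X^M ->
  Z27 K (3%:P * a * S ^+ 2).
Proof.
move=> hKM ->.
have -> : 3%:P * a * (3%:P * T - 'X^M) ^+ 2 =
  27%:P * (a * T ^+ 2) + 'X^M * (3%:P * a * ('X^M - 6%:P * T)) by ring.
by apply: Z27D; [apply: Z27_27 | apply: Z27_Xn].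
Qed.

Lemma ZS3 K M (T S a : {poly int}) : (K <= M)%N -> S = 3%:P * T - 'X^M ->
  Z27 K (a * S ^+ 3).
Proof.
move=> hKM ->.
have -> : a * (3%:P * T - 'X^M) ^+ 3 = 27%:P * (a * T ^+ 3) +
   'X^M * (a * (- 27%:P * T ^+ 2 + 9%:P * T * 'X^M - 'X^M ^+ 2)) by ring.
by apply: Z27D; [apply: Z27_27 | apply: Z27_Xn].
Qed.

Lemma Q0 N : (psiN_trunc N).[0] = 1.
Proof.
rewrite /psiN_trunc horner_prod; apply: big1 => j _.
by rewrite !hornerE expr0n expn_eq0 /=; exact: subr0.
Qed.

Lemma ZG m : let G := zRHS m.+1 in Z27 m.+1 (G ^+ 2 - G + 'X).
Proof.
move=> G.
have hKM : (m.+1 <= 3 ^ m.+1)%N by apply: ltnW; apply: ltn_expl.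
have [T hT] := psi_mod3 m.+1.
have hS : (1 - 'X) * psiN_trunc m.+1 ^+ 2 - 1 = 3%:P * T - 'X^(3 ^ m.+1).
  by rewrite hT; ring.
apply: (@Z27_cancel _ _ ((1 - 'X) ^+ 5) 1).
  by rewrite -horner_coef0 !hornerE expr1n subrr dvdz0.
rewrite mulrC /G zRHS_eq.
have := main_identity (psiN_trunc m.+1); rewrite /= => ->.
rewrite hS.
set S := 3%:P * T - 'X^(3 ^ m.+1).
have hS' : S = 3%:P * T - 'X^(3 ^ m.+1) by [].
apply: Z27D; last exact: Z27_27.
apply: Z27D; last first.
  rewrite (_ : f5 * S ^+ 5 = (f5 * S ^+ 2) * S ^+ 3); last by ring.
  exact: ZS3 hKM hS'.
apply: Z27D; last first.
  rewrite (_ : f4 * S ^+ 4 = (f4 * S) * S ^+ 3); last by ring.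
  exact: ZS3 hKM hS'.
apply: Z27D; last exact: ZS3 hKM hS'.
apply: Z27D; last exact: ZS2 hKM hS'.
apply: Z27D; last exact: ZS1 hKM hS'.
exact: Z27_27.
Qed.

Lemma ZH m : let H := 'X * \poly_(i < m) (catalan i)%:Z in
  Z27 m.+1 (H ^+ 2 - H + 'X).
Proof.
move=> H; set p := \poly_(i < m) (catalan i)%:Z.
have hp : forall k, (k < m)%N -> p`_k = (catalan k)%:Z.
  by move=> k hk; rewrite coef_poly hk.
have -> : H ^+ 2 - H + 'X = 'X * ('X * p ^+ 2 - p + 1).
  by rewrite /H -/p; ring.
move=> i hi; rewrite coefXM; case: i hi => [|j] hj //=.
have hj' : (j < m)%N by lia.
case: j hj hj' => [|k] hk hk'.
  by rewrite !coefD coefN coefXM coef1 hp.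
rewrite !coefD coefN coefXM coef1 /= hp // expr2 coefM.
rewrite (eq_bigr (fun i : 'I_k.+1 => (catalan i)%:Z * (catalan (k - i))%:Z)).
  by rewrite -segner addr0 subrr.
move=> i _; have := ltn_ord i; move=> hi.
rewrite !hp //; lia.
Qed.

Theorem theorem13p2 (m : nat) :
  ((zRHS m.+1)`_m == (if m is k.+1 then (catalan k)%:Z else 0) %[mod 27])%Z.
Proof.
set G := zRHS m.+1.
set H := 'X * \poly_(i < m) (catalan i)%:Z.
have hD : Z27 m.+1 ((G - H) * (G + H - 1)).
  have -> : (G - H) * (G + H - 1) = (G ^+ 2 - G + 'X) - (H ^+ 2 - H + 'X) by ring.
  by apply: Z27D; [apply: ZG | apply: Z27N; apply: ZH].
have hU : (27 %| (G + H - 1)`_0 * -1 - 1)%Z.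
  by rewrite -horner_coef0 /G zRHS_eq !hornerE Q0 /H !hornerE.
have hGH := @Z27_cancel m.+1 (G - H) (G + H - 1) (-1) hU hD m (ltnSn m).
rewrite coefB in hGH; rewrite eqz_mod_dvd.
have hHm : H`_m = (if m is k.+1 then (catalan k)%:Z else 0).
  rewrite /H coefXM; case: m {G H hD hU hGH} => [|k] //=.
  by rewrite coef_poly ltnSn.
by rewrite -hHm.
Qed.
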